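(* Let $\Sigma$ be a finite alphabet, $L \subseteq \Sigma^*$ regular, and $\mathcal{A}$ a finite automaton for $L$ with $m$ states. Assume that $\mathcal{B} = \mathcal{A}^{\mathsf{R}\mathsf{D}}$ is well-behaved. There are constants $c_m, d_m$ depending only on $m$ such that: (i) if $\mathcal{A}$ is a DFA, then $V_L(n) \leq (2^m \cdot m + 1)\cdot \log n + c_m$ for all sufficiently large $n$; (ii) if $\mathcal{A}$ is an NFA, then $V_L(n) \leq (4^m + 1)\cdot\log n + d_m$ for all sufficiently large $n$.
   Context: $\log x$ denotes $\lfloor \log_2 x\rfloor$. For an NFA $\mathcal{A}$, $\mathcal{A}^\mathsf{R}$ is the NFA obtained by reversing all transitions and swapping initial and final state sets, and $\mathcal{A}^{\mathsf{RD}}$ is the subset-construction DFA of $\mathcal{A}^\mathsf{R}$ restricted to states reachable from its initial state (so it accepts $L^\mathsf{R}$). A DFA $(Q,\Sigma,q_0,\delta,F)$ is well-behaved if every strongly connected component $C$ (inclusion-maximal set of mutually reachable states) reachable from $q_0$ satisfies: for all $q\in C$ and $u,v\in\Sigma^*$ with $|u|=|v|$ and $\delta(q,u),\delta(q,v)\in C$, $\delta(q,u)\in F \iff \delta(q,v)\in F$. Variable-size sliding window model: a streaming algorithm over $\overline\Sigma$ is a deterministic (possibly infinite-state) automaton with an injective encoding $\mathrm{enc}$ of states into bit strings, and $\mathrm{space}(\mathcal{A},w)=\max\{|\mathrm{enc}(\mathcal{A}(u))|: u\text{ prefix of }w\}$. Let $\overline\Sigma=\Sigma\cup\{\downarrow\}$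 and $\mathrm{wnd}\colon\overline\Sigma^*\to\Sigma^*$ given by $\mathrm{wnd}(\varepsilon)=\varepsilon$, $\mathrm{wnd}(ub)=\mathrm{wnd}(u)b$ ($b\in\Sigma$), $\mathrm{wnd}(u\!\downarrow)=\varepsilon$ if $\mathrm{wnd}(u)=\varepsilon$, $\mathrm{wnd}(u\!\downarrow)=v$ if $\mathrm{wnd}(u)=bv$. A variable-size sliding window algorithm for $L$ is a streaming algorithm over $\overline\Sigma$ accepting $\{w:\mathrm{wnd}(w)\in L\}$, with space complexity $v_\mathcal{A}(n)=\max\{\mathrm{space}(\mathcal{A},u): |\mathrm{wnd}(v)|\le n\text{ for all prefixes }v\text{ of }u\}$. $V_L(n)$ is the minimum of $v_\mathcal{A}(n)$ over all variable-size sliding window algorithms $\mathcal{A}$ for $L$. *)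

(* Defs.v *)
From mathcomp Require Import all_boot.
Set Implicit Arguments. Unset Strict Implicit. Unset Printing Implicit Defensive.

Record nfa (Sigma Q : finType) := NFA {
  n_init  : {set Q};
  n_trans : Q -> Sigma -> {set Q};
  n_final : {set Q} }.

Record dfa (Sigma Q : finType) := DFA {
  d_init  : Q;
  d_trans : Q -> Sigma -> Q;
  d_final : {set Q} }.

Definition n_step (Sigma Q : finType) (A : nfa Sigma Q) (S : {set Q}) (a : Sigma)
  : {set Q} := \bigcup_(q in S) n_trans A q a.
Definition n_star (Sigma Q : finType) (A : nfa Sigma Q) (S : {set Q}) (w : seq Sigma)
  : {set Q} := foldl (n_step A) S w.

Definition lang (Sigma Q : finType) (A : nfa Sigma Q) (w : seq Sigma) : Prop :=
  n_star A (n_init A) w :&: n_final A != set0.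

Definition d_star (Sigma Q : finType) (D : dfa Sigma Q) (q : Q) (w : seq Sigma) : Q :=
  foldl (d_trans D) q w.

Definition nfa_of_dfa (Sigma Q : finType) (D : dfa Sigma Q) : nfa Sigma Q :=
  NFA [set d_init D] (fun q a => [set d_trans D q a]) (d_final D).

Definition nfa_rev (Sigma Q : finType) (A : nfa Sigma Q) : nfa Sigma Q :=
  NFA (n_final A) (fun p a => [set q | p \in n_trans A q a]) (n_init A).

(* subset-construction DFA of an NFA (on all subsets; restriction to the
   states reachable from the initial one is irrelevant for well-behavedness) *)
Definition subset_dfa (Sigma Q : finType) (A : nfa Sigma Q) : dfa Sigma {set Q} :=
  DFA (n_init A) (n_step A) [set S : {set Q} | S :&: n_final A != set0].

Definition rev_det (Sigma Q : finType) (A : nfa Sigma Q) : dfa Sigma {set Q} :=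
  subset_dfa (nfa_rev A).

Definition d_reach (Sigma Q : finType) (D : dfa Sigma Q) (p q : Q) : Prop :=
  exists w, d_star D p w = q.

Definition mutually_reachable (Sigma Q : finType) (D : dfa Sigma Q) (C : {set Q}) : Prop :=
  forall p q, p \in C -> q \in C -> d_reach D p q.

Definition is_scc (Sigma Q : finType) (D : dfa Sigma Q) (C : {set Q}) : Prop :=
  mutually_reachable D C /\
  forall C' : {set Q}, C \subset C' -> mutually_reachable D C' -> C' = C.

Definition well_behaved (Sigma Q : finType) (D : dfa Sigma Q) : Prop :=
  forall C : {set Q}, is_scc D C ->
    (exists2 p, p \in C & d_reach D (d_init D) p) ->
    forall q (u v : seq Sigma), q \in C -> size u = size v ->
      d_star D q u \in C -> d_star D q v \in C ->
      (d_star D q u \in d_final D) = (d_star D q v \in d_final D).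

(* the extended alphabet Sigma-bar = Sigma + {down}; None stands for down *)
Definition wnd_step (Sigma : Type) (s : seq Sigma) (b : option Sigma) : seq Sigma :=
  match b with
  | Some a => rcons s a
  | None => behead s
  end.

Definition wnd (Sigma : Type) (w : seq (option Sigma)) : seq Sigma :=
  foldl (@wnd_step Sigma) [::] w.

Record streaming_alg (Sigma : Type) := StreamingAlg {
  sa_state : Type;
  sa_init  : sa_state;
  sa_trans : sa_state -> option Sigma -> sa_state;
  sa_final : sa_state -> Prop;
  sa_enc   : sa_state -> seq bool;
  sa_enc_inj : injective sa_enc }.
Arguments sa_init {Sigma} s.
Arguments sa_trans {Sigma} s _ _.
Arguments sa_final {Sigma} s _.
Arguments sa_enc {Sigma} s _.

Definition sa_run (Sigma : Type) (P : streaming_alg Sigma) (w : seq (option Sigma))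
  : sa_state P := foldl (sa_trans P) (sa_init P) w.

Definition space (Sigma : Type) (P : streaming_alg Sigma) (w : seq (option Sigma)) : nat :=
  \max_(i < (size w).+1) size (sa_enc P (sa_run P (take i w))).

Definition is_vsw_alg (Sigma : Type) (L : seq Sigma -> Prop) (P : streaming_alg Sigma)
  : Prop := forall w, sa_final P (sa_run P w) <-> L (wnd w).

Definition v_le (Sigma : Type) (P : streaming_alg Sigma) (n k : nat) : Prop :=
  forall u : seq (option Sigma),
    (forall i, i <= size u -> size (wnd (take i u)) <= n) -> space P u <= k.

(* V_L(n) <= k, where V_L(n) = min over all vsw algorithms P for L of v_P(n) *)
Definition V_le (Sigma : Type) (L : seq Sigma -> Prop) (n k : nat) : Prop :=
  exists P : streaming_alg Sigma, is_vsw_alg L P /\ v_le P n k.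

Definition log2 (x : nat) : nat := trunc_log 2 x.

(* Main.v *)
Require Import Defs.
From mathcomp Require Import all_boot zify.
From Stdlib Require Import ClassicalEpsilon.
Set Implicit Arguments. Unset Strict Implicit. Unset Printing Implicit Defensive.

Section Window.
Variable Sigma : Type.

Lemma wnd_shape (l : nat) (x : seq (option Sigma)) :
  forall i (y : seq Sigma), exists i' y', forall w : seq Sigma, size w = l ->
    foldl (@wnd_step Sigma) (drop i w ++ y) x = drop i' w ++ y'.
Proof.
elim: x => [|b x IH] i y /=; first by exists i, y.
case: b => [a|] /=.
  have [i' [y' H]] := IH i (rcons y a).
  by exists i', y' => w Hw; rewrite /= rcons_cat H.
have [Hi|Hi] := ltnP i l.
  have [i' [y' H]] := IH i.+1 y.
  exists i', y' => w Hw; rewrite -H //; congr (foldl _ _ x).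
  have: 0 < size (drop i w) by rewrite size_drop Hw subn_gt0.
  rewrite -[i.+1]add1n -drop_drop.
  by case: (drop i w) => [|a t] /=; rewrite ?drop0.
have [i' [y' H]] := IH i (behead y).
exists i', y' => w Hw; rewrite -H //; congr (foldl _ _ x).
by rewrite drop_oversize ?Hw.
Qed.

End Window.

Lemma size_wnd_step (Sigma : Type) (s : seq Sigma) b :
  size (wnd_step s b) = if b is Some _ then (size s).+1 else (size s).-1.
Proof. by case: b => [a|] /=; rewrite ?size_rcons ?size_behead. Qed.

Section Code.
Variables (KT : finType) (k : nat).
Hypothesis Hcard : #|KT| <= 2 ^ k.

Let FT := {ffun 'I_k -> bool}.
Lemma cardFT : #|{: FT}| = 2 ^ k.
Proof. by rewrite card_ffun card_bool card_ord. Qed.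

Definition code (x : KT) : seq bool :=
  fgraph (enum_val (cast_ord (esym cardFT) (widen_ord Hcard (enum_rank x))) : FT).

Lemma size_code x : size (code x) = k.
Proof. by rewrite /code size_tuple card_ord. Qed.

Lemma code_inj : injective code.
Proof.
have fi : injective (@fgraph 'I_k bool) := can_inj fgraphK.
move=> x y H; have := fi _ _ (val_inj H).
move/enum_val_inj/(congr1 val) => /= /val_inj.
exact: enum_rank_inj.
Qed.
End Code.

Section Gen.
Variables (Sigma : finType) (L : seq Sigma -> Prop) (n k : nat) (KT : finType).
Variable key : seq Sigma -> KT.
Definition beq (u v : seq Sigma) :=
  forall x, L (foldl (@wnd_step Sigma) u x) <-> L (foldl (@wnd_step Sigma) v x).
Hypothesis Hkey : forall u v, size u <= n -> size v <= n -> key u = key v ->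
  size u = size v /\ beq u v.
Hypothesis Hcard : #|KT| <= 2 ^ k.

Definition key' (w : seq Sigma) : KT + seq Sigma :=
  if size w <= n then inl (key w) else inr w.

Definition rep (w : seq Sigma) : seq Sigma :=
  xchoose (ex_intro (fun w' => key' w' == key' w) w (eqxx _)).

Lemma rep_key w : key' (rep w) = key' w.
Proof. exact/eqP/(xchooseP (ex_intro (fun w' => key' w' == key' w) w (eqxx _))). Qed.

Lemma rep_eq a b : key' a = key' b -> rep a = rep b.
Proof. by move=> e; apply: eq_xchoose => w; rewrite e. Qed.

Lemma rep_idem w : rep (rep w) = rep w.
Proof. exact/rep_eq/rep_key. Qed.

Lemma beq_refl u : beq u u. Proof. by []. Qed.
Lemma beq_sym u v : beq u v -> beq v u. Proof. by move=> H x; apply: iff_sym. Qed.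
Lemma beq_trans u v w : beq u v -> beq v w -> beq u w.
Proof. by move=> H1 H2 x; exact: iff_trans (H1 x) (H2 x). Qed.
Lemma beq_step u v b : beq u v -> beq (wnd_step u b) (wnd_step v b).
Proof. by move=> H x; exact: (H (b :: x)). Qed.

Lemma rep_prop w : size (rep w) = size w /\ beq (rep w) w.
Proof.
have := rep_key w; rewrite /key'.
case: ifP => H1; case: ifP => H2 //.
- by case=> /(Hkey H1 H2).
- by case=> ->.
Qed.

Definition enc (s : seq Sigma) : seq bool :=
  if (size s <= n) && (rep s == s) then false :: code Hcard (key s)
  else true :: nseq (pickle s) false.

Lemma enc_inj : injective enc.
Proof.
move=> s1 s2; rewrite /enc.
case: ifP => /andP; case: ifP => /andP //.
- move=> [H1 /eqP R1] [H2 /eqP R2] [] /code_inj e.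
  by rewrite -R1 -R2; apply: rep_eq; rewrite /key' H1 H2 e.
- move=> _ _ [] /(congr1 size); rewrite !size_nseq.
  exact: (pcan_inj pickleK).
Qed.

Definition galg : streaming_alg Sigma :=
  @StreamingAlg Sigma (seq Sigma) (rep [::]) (fun s b => rep (wnd_step s b))
    (fun s => L s) enc enc_inj.

Lemma galg_run w : exists t, sa_run galg w = rep t /\ size t = size (wnd w)
  /\ beq t (wnd w).
Proof.
elim/last_ind: w => [|w b [t [E1 [E2 E3]]]]; first by exists [::].
rewrite /sa_run /wnd !foldl_rcons -/(sa_run galg w) -/(wnd w) E1 /=.
exists (wnd_step (rep t) b); split=> //.
have [S1 B1] := rep_prop t.
split; first by rewrite !size_wnd_step S1 E2.
apply: beq_step; exact: beq_trans B1 E3.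
Qed.

Lemma gen_V_le : V_le L n k.+1.
Proof.
exists galg; split.
  move=> w; have [t [E1 [_ E3]]] := galg_run w.
  rewrite E1 /=; have [_ B1] := rep_prop t.
  exact: (beq_trans B1 E3 [::]).
move=> u Hu; apply/bigmax_leqP => i _.
have [t [E1 [E2 _]]] := galg_run (take i u).
rewrite E1 /= /enc rep_idem eqxx.
have [S1 _] := rep_prop t.
have Hs : size t <= n by rewrite E2; apply: Hu; rewrite -ltnS.
by rewrite S1 Hs /= size_code.
Qed.
End Gen.

Section NFA.
Variables (Sigma Q : finType) (A : nfa Sigma Q).

Lemma nstar_cons (A0 : nfa Sigma Q) S a x : n_star A0 S (a :: x) = n_star A0 (n_step A0 S a) x.
Proof. by []. Qed.

Lemma nstar_union S x : n_star A S x = \bigcup_(q in S) n_star A [set q] x.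
Proof.
elim: x S => [|a x IH] S.
  apply/setP=> q; apply/idP/bigcupP => [Hq|[p Hp]].
    by exists q => //=; rewrite /n_star /= inE.
  by rewrite /n_star /= inE => /eqP ->.
rewrite nstar_cons IH; apply/setP => t; apply/bigcupP/bigcupP.
  move=> [r /bigcupP [q Hq Hr] Ht]; exists q => //.
  rewrite nstar_cons IH; apply/bigcupP; exists r => //.
  by apply/bigcupP; exists q; rewrite ?inE.
move=> [q Hq]; rewrite nstar_cons IH => /bigcupP [r /bigcupP [q' ] ].
rewrite inE => /eqP -> Hr Ht; exists r => //; apply/bigcupP; by exists q.
Qed.

Lemma nstar_rcons (A0 : nfa Sigma Q) S x a : n_star A0 S (rcons x a) = n_step A0 (n_star A0 S x) a.
Proof. by rewrite /n_star foldl_rcons. Qed.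

Lemma nstar_rev T x :
  n_star (nfa_rev A) T (rev x) = [set q | n_star A [set q] x :&: T != set0].
Proof.
elim: x T => [|a x IH] T.
  apply/setP=> q; rewrite !inE /n_star /=.
  apply/idP/set0Pn => [Hq|[p]]; first by exists q; rewrite !inE eqxx.
  by rewrite !inE => /andP [/eqP ->].
rewrite rev_cons nstar_rcons IH; apply/setP => q; rewrite inE nstar_cons nstar_union.
apply/bigcupP/set0Pn.
  move=> [r]; rewrite inE => /set0Pn [t]; rewrite inE => /andP [Ht1 Ht2].
  rewrite /= inE => Hqr; exists t; rewrite inE Ht2 andbT.
  apply/bigcupP; exists r => //; rewrite /n_step; apply/bigcupP; by exists q; rewrite ?inE ?eqxx.
move=> [t]; rewrite inE => /andP [/bigcupP [r Hr Ht] HtT].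
exists r; last by rewrite /= inE; move: Hr => /bigcupP [q'];  rewrite inE => /eqP ->.
by rewrite inE; apply/set0Pn; exists t; rewrite inE Ht.
Qed.

Definition B := rev_det A.

Lemma lang_B x : lang A x <-> d_star B (n_final A) (rev x) \in d_final B.
Proof.
rewrite /lang /d_star /= inE.
have -> : foldl (n_step (nfa_rev A)) (n_final A) (rev x) = n_star (nfa_rev A) (n_final A) (rev x) by [].
rewrite nstar_rev nstar_union; split.
  move=> /set0Pn [t]; rewrite inE => /andP [/bigcupP [q Hq Ht] Hf].
  apply/set0Pn; exists q; rewrite !inE Hq andbT; apply/set0Pn; exists t; by rewrite inE Ht.
move=> /set0Pn [q]; rewrite !inE => /andP [/set0Pn [t]]; rewrite inE => /andP [Ht Hf] Hq.
by apply/set0Pn; exists t; rewrite inE Hf andbT; apply/bigcupP; exists q.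
Qed.

End NFA.

Definition decB (P : Prop) : bool := if excluded_middle_informative P then true else false.
Lemma decBP (P : Prop) : reflect P (decB P).
Proof. by rewrite /decB; case: excluded_middle_informative => H; constructor. Qed.

Section DFA.
Variables (Sigma T : finType) (D : dfa Sigma T).

Lemma dstar_cat q u v : d_star D q (u ++ v) = d_star D (d_star D q u) v.
Proof. by rewrite /d_star foldl_cat. Qed.

Lemma reach_refl p : d_reach D p p.
Proof. by exists [::]. Qed.
Lemma reach_trans p q r : d_reach D p q -> d_reach D q r -> d_reach D p r.
Proof. by move=> [u <-] [v <-]; exists (u ++ v); rewrite dstar_cat. Qed.

Definition scc (p : T) : {set T} :=
  [set q | decB (d_reach D p q) && decB (d_reach D q p)].

Lemma scc_mem p : p \in scc p.
Proof. by rewrite inE; apply/andP; split; apply/decBP/reach_refl. Qed.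

Lemma in_scc p q : (q \in scc p) <-> d_reach D p q /\ d_reach D q p.
Proof. by rewrite inE; split => [/andP [/decBP ? /decBP ?]|[? ?]] //; apply/andP; split; apply/decBP. Qed.

Lemma scc_eq p q : d_reach D p q -> d_reach D q p -> scc p = scc q.
Proof.
move=> Hpq Hqp; apply/setP => r; apply/idP/idP => /in_scc [H1 H2]; apply/in_scc; split.
- exact: reach_trans Hqp H1.
- exact: reach_trans H2 Hpq.
- exact: reach_trans Hpq H1.
- exact: reach_trans H2 Hqp.
Qed.

Lemma scc_is_scc p : is_scc D (scc p).
Proof.
split.
  move=> q r /in_scc [_ H1] /in_scc [H2 _]; exact: reach_trans H1 H2.
move=> C' Hsub Hmr; apply/setP => q; apply/idP/idP => [Hq|]; last by move/(subsetP Hsub).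
have Hp : p \in C' by apply: (subsetP Hsub); exact: scc_mem.
by apply/in_scc; split; apply: Hmr.
Qed.

Variable P : T.
Definition Y (v : seq Sigma) j := d_star D P (take j v).
Definition isev (v : seq Sigma) j := (0 < j) && (scc (Y v j) != scc (Y v j.-1)).
Definition events (v : seq Sigma) : seq (nat * T) :=
  [seq (j, Y v j) | j <- [seq j <- iota 1 (size v) | isev v j]].

Fixpoint lastev (f : nat -> bool) j :=
  if j is j'.+1 then (if f j then j else lastev f j') else 0.

Lemma lastev_le f j : lastev f j <= j.
Proof. by elim: j => //= j IH; case: ifP => // _; exact: leqW. Qed.

Lemma lastev_ev f j : lastev f j = 0 \/ f (lastev f j).
Proof. by elim: j => [|j IH] /=; [left | case: ifP => H; [right|]]. Qed.

Lemma lastev_none f j t : lastev f j < t <= j -> ~~ f t.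
Proof.
elim: j => [|j IH] /=; first by case: t => //= t /andP [] _; rewrite ltn0.
case: ifP => Hf.
  by move=> /andP [H1 H2]; move: (leq_ltn_trans H2 H1); rewrite ltnn.
move=> /andP [H1]; rewrite leq_eqVlt => /orP [/eqP ->|H2]; first by rewrite Hf.
by apply: IH; rewrite H1.
Qed.

Lemma lastev_ext f g j : (forall t, f t = g t) -> lastev f j = lastev g j.
Proof. by move=> H; elim: j => //= j ->; rewrite H. Qed.

Lemma Y_shift v e d : Y v (e + d) = d_star D (Y v e) (take d (drop e v)).
Proof. by rewrite /Y takeD dstar_cat. Qed.

Lemma Y_reach v t1 t2 : t1 <= t2 -> d_reach D (Y v t1) (Y v t2).
Proof. by move=> H; rewrite -(subnKC H) Y_shift; eexists. Qed.

Lemma isev_size v j : isev v j -> 0 < j <= size v.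
Proof.
rewrite /isev => /andP [-> /=]; apply: contraNT; rewrite -ltnNge => H.
by rewrite /Y (take_oversize (ltnW H)) take_oversize // -ltnS (ltn_predK H).
Qed.

Lemma mem_events v j : (j \in [seq p.1 | p <- events v]) = isev v j.
Proof.
rewrite /events -map_comp /= map_id mem_filter mem_iota.
apply/andP/idP => [[] //|H]; split=> //.
by have /andP [H1 H2] := isev_size H; rewrite H1 add1n ltnS H2.
Qed.

Lemma size_events v : (size (events v)).+1 <= #|T|.
Proof.
set pos := 0 :: [seq j <- iota 1 (size v) | isev v j].
have Hu : uniq [seq Y v j | j <- pos].
  rewrite map_inj_in_uniq.
    rewrite /pos /= filter_uniq ?iota_uniq // andbT mem_filter mem_iota.
    by rewrite ltn0 andbF.
  move=> t1 t2 H1 H2 E.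
  have key : forall a b, a \in pos -> b \in pos -> a < b -> Y v a = Y v b -> False.
    move=> a b Ha Hb Hab Eab.
    have Hb' : isev v b.
      move: Hb; rewrite /pos inE mem_filter => /orP [/eqP Hb0|/andP [//]].
      by move: Hab; rewrite Hb0 ltn0.
    move: Hb' => /andP [Hb0 /eqP]; apply.
    apply: scc_eq; last exact: (Y_reach v (leq_pred b)).
    rewrite -Eab; apply: Y_reach.
    by rewrite -ltnS prednK.
  case: (ltngtP t1 t2) => // H.
  - by exfalso; exact: key H1 H2 H E.
  - by exfalso; exact: key H2 H1 H (esym E).
have := max_card (mem [seq Y v j | j <- pos]); rewrite (card_uniqP Hu).
by rewrite size_map /= /events size_map.
Qed.

End DFA.

Section Bits.
Variables (Sigma T : finType) (D : dfa Sigma T).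
Hypothesis wb : well_behaved D.

Lemma Y_min P v j : Y D P v j = Y D P v (minn j (size v)).
Proof. by rewrite /Y take_min take_size. Qed.

Lemma scc_const P v j t : lastev (isev D P v) j <= t <= j ->
  scc D (Y D P v t) = scc D (Y D P v (lastev (isev D P v) j)).
Proof.
set e := lastev _ j => /andP [H1 H2].
have [d Ed] : exists d, t = e + d by exists (t - e); rewrite subnKC.
subst t; clear H1.
elim: d H2 => [|d IH] Hd; first by rewrite addn0.
rewrite -IH; last by apply: ltnW; rewrite -addnS.
have : ~~ isev D P v (e + d.+1).
  apply: (@lastev_none _ j); apply/andP; split => //.
  by rewrite addnS ltnS; apply: leq_addr.
by rewrite /isev addnS /= negbK => /eqP.
Qed.

Lemma events_bits P (HP : d_reach D (d_init D) P) v1 v2 :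
  size v1 = size v2 -> events D P v1 = events D P v2 ->
  forall j, (Y D P v1 j \in d_final D) = (Y D P v2 j \in d_final D).
Proof.
move=> Hs Hev j0; rewrite (Y_min _ v1) (Y_min _ v2) -Hs.
have : minn j0 (size v1) <= size v1 by rewrite geq_minr.
move: (minn _ _) => j Hj.
have Hisev t : isev D P v1 t = isev D P v2 t by rewrite -!mem_events Hev.
have He : lastev (isev D P v2) j = lastev (isev D P v1) j by apply: lastev_ext.
set e := lastev (isev D P v1) j.
have HYe : Y D P v1 e = Y D P v2 e.
  case: (lastev_ev (isev D P v1) j) => He0.
    by rewrite /e He0 /Y !take0.
  have : (e, Y D P v1 e) \in events D P v1.
    apply: (map_f (fun j => (j, Y D P v1 j))).
    rewrite mem_filter He0 mem_iota.
    by have /andP [H1 H2] := isev_size He0; rewrite H1 add1n ltnS H2.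
  by rewrite Hev => /mapP [t _ [-> ->]].
have Hej : e <= j by apply: lastev_le.
have Hl2 : j <= size v2 by rewrite -Hs.
have Hsz v : j <= size v -> size (take (j - e) (drop e v)) = j - e.
  by move=> Hv; rewrite size_takel // size_drop leq_sub2r.
set C := scc D (Y D P v1 e).
have HY v : Y D P v j = d_star D (Y D P v e) (take (j - e) (drop e v)).
  by rewrite -Y_shift subnKC.
have := wb (scc_is_scc D (Y D P v1 e)).
move/(_ (ex_intro2 _ _ (Y D P v1 e) (scc_mem _ _) (reach_trans HP (ex_intro _ (take e v1) erefl)))).
move/(_ (Y D P v1 e) (take (j - e) (drop e v1)) (take (j - e) (drop e v2)) (scc_mem _ _)).
rewrite !Hsz // -HY HYe -HY => /(_ erefl); apply.
- rewrite -HYe; have := @scc_const P v1 j j; rewrite -/e Hej leqnn => /(_ isT) <-.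
  exact: scc_mem.
- rewrite -HYe HYe; have := @scc_const P v2 j j; rewrite He -/e Hej leqnn => /(_ isT) <-.
  exact: scc_mem.
Qed.
End Bits.

Section EncList.
Variables (T : finType) (E n : nat).

Definition encf (s : seq (nat * T)) (i : nat) : option ('I_n.+1 * T) :=
  omap (fun p => (inord p.1, p.2)) (nth None (map Some s) i).

Definition enc_list (s : seq (nat * T)) : {ffun 'I_E -> option ('I_n.+1 * T)} :=
  [ffun i : 'I_E => encf s i].

Lemma encf_inj (s1 s2 : seq (nat * T)) : forall m, size s1 <= m -> size s2 <= m ->
  all (fun p => p.1 <= n) s1 -> all (fun p => p.1 <= n) s2 ->
  (forall i, i < m -> encf s1 i = encf s2 i) -> s1 = s2.
Proof.
elim: s1 s2 => [|p s1 IH] [|q s2] m //=.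
- by case: m => // m _ _ _ _ /(_ 0 isT).
- by case: m => // m _ _ _ _ /(_ 0 isT).
case: m => // m; rewrite !ltnS => H1 H2 /andP [Hp A1] /andP [Hq A2] H.
have := H 0 isT; rewrite /encf /= => [[E1 E2]].
have Epq : p = q.
  clear H IH; move: Hp Hq E1 E2; case: p => a b; case: q => c d /= Ha Hc E1 ->.
  by have := congr1 (@nat_of_ord _) E1; rewrite !inordK // => ->.
rewrite Epq (IH s2 m) // => i Hi; exact: (H i.+1).
Qed.

Lemma enc_list_inj (s1 s2 : seq (nat * T)) : size s1 <= E -> size s2 <= E ->
  all (fun p => p.1 <= n) s1 -> all (fun p => p.1 <= n) s2 ->
  enc_list s1 = enc_list s2 -> s1 = s2.
Proof.
move=> H1 H2 A1 A2 Ee; apply: (encf_inj H1 H2 A1 A2) => i Hi.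
by have := congr1 (fun f : {ffun _ -> _} => f (Ordinal Hi)) Ee; rewrite /= !ffunE.
Qed.
End EncList.

Section Sep.
Variable Q : finType.

Definition agree (s : seq {set Q}) (q qq : Q) := all (fun P : {set Q} => (q \in P) == (qq \in P)) s.
Definition Cls s q : {set Q} := [set q' | agree s q q'].
Definition CL s : {set {set Q}} := [set Cls s q | q : Q].

Lemma agree_refl s q : agree s q q.
Proof. by apply/allP => P _. Qed.
Lemma agree_sym s q q' : agree s q q' -> agree s q' q.
Proof. by move/allP => H; apply/allP => P /H /eqP ->. Qed.
Lemma agree_trans s q1 q2 q3 : agree s q1 q2 -> agree s q2 q3 -> agree s q1 q3.
Proof. by move=> /allP H1 /allP H2; apply/allP => P HP; rewrite (eqP (H1 _ HP)) H2. Qed.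

Lemma Cls_eq s q q' : agree s q q' -> Cls s q = Cls s q'.
Proof.
move=> H; apply/setP => x; rewrite !inE; apply/idP/idP => Hx.
- exact: agree_trans (agree_sym H) Hx.
- exact: agree_trans H Hx.
Qed.

Lemma CL_grow (P : {set Q}) s q q' : agree s q q' -> (q \in P) != (q' \in P) ->
  #|CL s| < #|CL (P :: s)|.
Proof.
move=> Hag HP.
pose g (N : {set Q}) := \bigcup_(y in N) Cls s y.
have Hg x : g (Cls (P :: s) x) = Cls s x.
  apply/setP => z; apply/bigcupP/idP => [[y]|Hz].
    rewrite inE /agree /= => /andP [_ Hy].
    by rewrite -(Cls_eq Hy).
  by exists x => //; rewrite inE agree_refl.
have Hsub : CL s \subset g @: CL (P :: s).
  apply/subsetP => N /imsetP [x _ ->]; apply/imsetP.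
  by exists (Cls (P :: s) x); [apply/imsetP; exists x | rewrite Hg].
apply: (leq_ltn_trans (subset_leq_card Hsub)).
rewrite ltn_neqAle leq_imset_card andbT.
apply/negP => /imset_injP Hinj.
have E1 : g (Cls (P :: s) q) = g (Cls (P :: s) q') by rewrite !Hg (Cls_eq Hag).
have Hq1 : Cls (P :: s) q \in CL (P :: s) by apply/imsetP; exists q.
have Hq2 : Cls (P :: s) q' \in CL (P :: s) by apply/imsetP; exists q'.
have := Hinj _ _ Hq1 Hq2 E1.
move/setP/(_ q'); rewrite !inE agree_refl /agree /= => /andP [].
by move: HP; rewrite eq_sym => /negbTE ->.
Qed.

Lemma CL_card s : #|CL s| <= #|Q|.
Proof. by rewrite /CL; apply: (leq_trans (leq_imset_card _ _)). Qed.

Lemma sep (s : seq {set Q}) : exists R0 : seq {set Q},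
  [/\ {subset R0 <= s}, size R0 <= #|CL R0| - 1 &
      forall q q', agree R0 q q' -> agree s q q'].
Proof.
elim: s => [|P s [R0 [H1 H2 H3]]]; first by exists [::]; split.
case: (boolP [forall q, forall q', agree R0 q q' ==> ((q \in P) == (q' \in P))]).
  move/forallP => H; exists R0; split => //.
    by move=> x /H1; rewrite inE => ->; rewrite orbT.
  move=> q q' Hq; apply/andP; split; last exact: H3.
  by have /forallP/(_ q')/implyP := H q; apply.
rewrite negb_forall => /existsP [q]; rewrite negb_forall => /existsP [q'].
rewrite negb_imply => /andP [Hag HP].
exists (P :: R0); split.
- by move=> x; rewrite !inE => /orP [->|/H1 ->]; rewrite ?orbT.
- have := CL_grow Hag HP.
  have : 0 < #|CL R0| by apply/card_gt0P; exists (Cls R0 q); apply/imsetP; exists q.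
  move: H2 => /=; lia.
- move=> x y /andP [Hx /H3 Hy]; exact/andP.
Qed.
End Sep.


Section Main.
Variables (Sigma Q : finType) (A : nfa Sigma Q).
Hypothesis wb : well_behaved (B A).
Variable R0 : seq {set Q}.
Hypothesis HR0 : forall P, P \in R0 -> d_reach (B A) (d_init (B A)) P.
Definition bit (P : {set Q}) (u : seq Sigma) := d_star (B A) P (rev u) \in d_final (B A).
Hypothesis Hdet : forall u v : seq Sigma, (forall P, P \in R0 -> bit P u = bit P v) ->
  forall y, bit (d_star (B A) (n_final A) (rev y)) u = bit (d_star (B A) (n_final A) (rev y)) v.

Let EE := #|{set Q}|.-1.
Let r := size R0.
Definition KT n := ('I_n.+1 * {ffun 'I_r -> {ffun 'I_EE -> option ('I_n.+1 * {set Q})}})%type.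
Definition mkey n (w : seq Sigma) : KT n :=
  (inord (size w), [ffun i : 'I_r => enc_list EE n (events (B A) (nth set0 R0 i) (rev w))]).

Lemma events_pos (D : dfa Sigma {set Q}) P v : all (fun p => p.1 <= size v) (events D P v).
Proof.
apply/allP => p /mapP [j]; rewrite mem_filter mem_iota => /andP [_ /andP [_ H]] -> /=.
by rewrite -ltnS -(add1n (size v)).
Qed.

Lemma bit_drop P u i : bit P (drop i u) = (Y (B A) P (rev u) (size u - i) \in d_final (B A)).
Proof. by rewrite /bit rev_drop. Qed.

Lemma mkey_ok n u v : size u <= n -> size v <= n -> mkey n u = mkey n v ->
  size u = size v /\ beq (lang A) u v.
Proof.
move=> Hu Hv [] /(congr1 val); rewrite /= !inordK // => Hs Hf.
split=> //.
have Hev : forall P, P \in R0 -> events (B A) P (rev u) = events (B A) P (rev v).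
  move=> P HP; have Hi : index P R0 < r by rewrite index_mem.
  have := congr1 (fun f : {ffun _ -> _} => f (Ordinal Hi)) Hf; rewrite /= !ffunE /= nth_index //.
  apply: enc_list_inj.
  - by have := size_events (B A) P (rev u); rewrite /EE; case: #|_|.
  - by have := size_events (B A) P (rev v); rewrite /EE; case: #|_|.
  - apply: sub_all (events_pos _ _ _) => p /= H; apply: leq_trans H _; by rewrite size_rev.
  - apply: sub_all (events_pos _ _ _) => p /= H; apply: leq_trans H _; by rewrite size_rev.
have Hb : forall P, P \in R0 -> forall i, bit P (drop i u) = bit P (drop i v).
  move=> P HP i; rewrite !bit_drop Hs; apply: events_bits => //.
  - exact: HR0.
  - by rewrite !size_rev.
  - exact: Hev.
move=> x.
have [i' [y' H]] := wnd_shape (size u) x 0 [::].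
have := H u erefl; have := H v (esym Hs); rewrite !drop0 !cats0 => -> ->.
rewrite !lang_B !rev_cat -!/(d_star _ _ _) !dstar_cat.
have := Hdet (fun P HP => Hb P HP i') y'; rewrite /bit => ->; done.
Qed.

Lemma card_KT n : #|{: KT n}| = n.+1 * (((n.+1) * #|{set Q}|).+1 ^ EE) ^ r.
Proof. by rewrite card_prod card_ord !card_ffun !card_ord card_option card_prod card_ord. Qed.

Lemma main_V_le n k : #|{: KT n}| <= 2 ^ k -> V_le (lang A) n k.+1.
Proof. move=> Hc; apply: (@gen_V_le _ _ n k (KT n) (mkey n)) => //; exact: mkey_ok. Qed.
End Main.


Arguments decBP {P}.
Lemma card_setT (T : finType) : #|{: {set T}}| = 2 ^ #|T|.
Proof. by rewrite -[LHS]cardsT -powersetT card_powerset cardsT. Qed.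

Lemma expn_mono a b e : a <= b -> a ^ e <= b ^ e.
Proof. by case: e => [|e] H //; rewrite leq_exp2r. Qed.

Lemma arith (n m E r K : nat) : E * r <= K ->
  n.+1 * ((n.+1 * 2 ^ m).+1 ^ E) ^ r <= 2 ^ ((K + 1) * log2 n + (m + 2) * K + 1).
Proof.
move=> HK; set l := log2 n.
have h1 : n.+1 <= 2 ^ l.+1 := trunc_log_ltn n (isT : 1 < 2).
have h2 : (n.+1 * 2 ^ m).+1 <= 2 ^ (l + m + 2).
  have -> : l + m + 2 = l.+1 + m + 1 by lia.
  rewrite !expnD expn1.
  have hb : 0 < 2 ^ m by rewrite expn_gt0.
  move: h1 hb; set a := 2 ^ l.+1; set b := 2 ^ m; nia.
rewrite -expnM.
apply: (@leq_trans (2 ^ l.+1 * (2 ^ (l + m + 2)) ^ (E * r))).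
  by apply: leq_mul => //; apply: expn_mono.
rewrite -expnM -expnD leq_exp2l // .
have : (l + m + 2) * (E * r) <= (l + m + 2) * K by rewrite leq_mul2l HK orbT.
nia.
Qed.

Section DFAcase.
Variables (Sigma : finType) (m : nat) (A : dfa Sigma 'I_m).

Lemma nstar_dfa q u : n_star (nfa_of_dfa A) [set q] u = [set d_star A q u].
Proof.
elim: u q => [|a u IH] q; first by [].
rewrite nstar_cons -IH; congr n_star.
by rewrite /n_step big_set1.
Qed.

Lemma bit_dfa P u : bit (nfa_of_dfa A) P u = (d_star A (d_init A) u \in P).
Proof.
rewrite /bit.
have -> : d_star (B (nfa_of_dfa A)) P (rev u) = n_star (nfa_rev (nfa_of_dfa A)) P (rev u) by [].
rewrite nstar_rev inE /=; apply/set0Pn/idP.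
  move=> [q]; rewrite !inE => /andP [/set0Pn [t]]; rewrite !inE nstar_dfa inE.
  by move=> /andP [/eqP -> HP] /eqP Hq; rewrite -Hq.
move=> H; exists (d_init A); rewrite !inE eqxx andbT; apply/set0Pn.
by exists (d_star A (d_init A) u); rewrite inE nstar_dfa inE eqxx.
Qed.
End DFAcase.

Theorem theorem5p2 :
  forall m : nat, exists c_m d_m : nat,
    (forall (Sigma : finType) (A : dfa Sigma 'I_m),
        well_behaved (rev_det (nfa_of_dfa A)) ->
        exists n0, forall n, n0 <= n ->
          V_le (lang (nfa_of_dfa A)) n ((2 ^ m * m + 1) * log2 n + c_m))
    /\
    (forall (Sigma : finType) (A : nfa Sigma 'I_m),
        well_behaved (rev_det A) ->
        exists n0, forall n, n0 <= n ->
          V_le (lang A) n ((4 ^ m + 1) * log2 n + d_m)).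
Proof.
move=> m.
exists ((m + 2) * (2 ^ m * m) + 2), ((m + 2) * 4 ^ m + 2); split.
  move=> Sigma A wb; exists 0 => n _.
  set A' := nfa_of_dfa A.
  set R := [set P | decB (d_reach (B A') (d_init (B A')) P)].
  have [R0 [Hsub Hsz Hag]] := sep (enum R).
  have HR0 : forall P, P \in R0 -> d_reach (B A') (d_init (B A')) P.
    by move=> P /Hsub; rewrite mem_enum inE => /decBP.
  have Hdet : forall u v : seq Sigma, (forall P, P \in R0 -> bit A' P u = bit A' P v) ->
    forall y, bit A' (d_star (B A') (n_final A') (rev y)) u =
              bit A' (d_star (B A') (n_final A') (rev y)) v.
    move=> u v H y; rewrite !bit_dfa.
    have : agree R0 (d_star A (d_init A) u) (d_star A (d_init A) v).
      by apply/allP => P HP; rewrite -!bit_dfa (H P HP).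
    move/Hag/allP => Hall; apply/eqP; apply: Hall; rewrite mem_enum inE; apply/decBP.
    by exists (rev y).
  have -> : (2 ^ m * m + 1) * log2 n + ((m + 2) * (2 ^ m * m) + 2) =
            ((2 ^ m * m + 1) * log2 n + (m + 2) * (2 ^ m * m) + 1).+1 by lia.
  apply: (main_V_le wb HR0 Hdet).
  rewrite card_KT card_setT card_ord.
  apply: arith.
  have Hr : size R0 <= m.
    apply: leq_trans Hsz _; apply: leq_trans (leq_subr _ _) _.
    by have := CL_card R0; rewrite card_ord.
  by apply: leq_mul; [exact: leq_pred | exact: Hr].
move=> Sigma A wb; exists 0 => n _.
set R := [set P | decB (d_reach (B A) (d_init (B A)) P)].
have HR0 : forall P, P \in enum R -> d_reach (B A) (d_init (B A)) P.
  by move=> P; rewrite mem_enum inE => /decBP.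
have Hdet : forall u v : seq Sigma, (forall P, P \in enum R -> bit A P u = bit A P v) ->
  forall y, bit A (d_star (B A) (n_final A) (rev y)) u =
            bit A (d_star (B A) (n_final A) (rev y)) v.
  move=> u v H y; apply: H; rewrite mem_enum inE; apply/decBP; by exists (rev y).
have -> : (4 ^ m + 1) * log2 n + ((m + 2) * 4 ^ m + 2) =
          ((4 ^ m + 1) * log2 n + (m + 2) * 4 ^ m + 1).+1 by lia.
apply: (main_V_le wb HR0 Hdet).
rewrite card_KT card_setT card_ord.
apply: arith.
have -> : 4 ^ m = 2 ^ m * 2 ^ m by rewrite -expnMn.
apply: leq_mul; first exact: leq_pred.
rewrite -cardE; apply: leq_trans (max_card _) _.
by rewrite card_setT card_ord.
Qed.
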